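(* Let $a,b,c,d\ge1$ be integers and let $$M=\begin{bmatrix}a&-1&-1&-1\\-1&b&-1&-1\\-1&-1&c&-1\\-1&-1&-1&d\end{bmatrix}.$$ If $\det M=0$ and $\min\{a,b,c,d\}=3$, then $a=b=c=d=3$. *)

(* Defs.v *)
From mathcomp Require Import all_boot all_order all_algebra.
Set Implicit Arguments. Unset Strict Implicit. Unset Printing Implicit Defensive.
Import Order.TTheory GRing.Theory Num.Theory.
Local Open Scope ring_scope.

Definition Mabcd (a b c d : int) : 'M[int]_4 :=
  \matrix_(i < 4, j < 4)
    if i == j then [:: a; b; c; d]`_i else -1.

(* Main.v *)
Require Import Defs.
From mathcomp Require Import all_boot all_order all_algebra.
From mathcomp Require Import ring.
Import Order.TTheory GRing.Theory Num.Theory.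
Local Open Scope ring_scope.
Lemma det3 (R : comRingType) (A : 'M[R]_3) : \det A =
  A 0 0 * (A 1 1 * A 2 2 - A 1 2 * A 2 1) - A 0 1 * (A 1 0 * A 2 2 - A 1 2 * A 2 0)
  + A 0 2 * (A 1 0 * A 2 1 - A 1 1 * A 2 0).
Proof.
rewrite (expand_det_row _ 0) !big_ord_recr big_ord0 /= add0r.
rewrite /cofactor !(expand_det_row _ 0) !big_ord_recr !big_ord0 /= !add0r.
rewrite /cofactor !det_mx11 !mxE.
set f := fun (i j : nat) => A (inord i) (inord j).
have hA : forall i j, A i j = f i j by move=> i j; rewrite /f !inord_val.
rewrite !hA /= /bump /=.
have e1 : (1 %% 3 = 1)%N by []. have e2 : ((1 + 1) %% 3 = 2)%N by [].
rewrite ?e1 ?e2 /=.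
ring.
Qed.
Lemma detE (a b c d : int) : \det (Mabcd a b c d) =
  (a+1)*(b+1)*(c+1)*(d+1) - ((b+1)*(c+1)*(d+1) + (a+1)*(c+1)*(d+1) + (a+1)*(b+1)*(d+1) + (a+1)*(b+1)*(c+1)).
Proof.
rewrite (expand_det_row _ 0) !big_ord_recr big_ord0 /= add0r.
rewrite /cofactor !det3 !mxE.
set g := fun (i j : nat) => if i == j then [:: a; b; c; d]`_i else -1.
have hA : forall i j, Mabcd a b c d i j = g i j by move=> i j; rewrite /g mxE.
rewrite /= /bump /= !add0n.
ring.
Qed.

From mathcomp Require Import zify.
Definition E (x y z w : int) := x*y*z*w - (y*z*w + x*z*w + x*y*w + x*y*z).
Lemma key (y z w : int) : 4 <= y -> 4 <= z -> 4 <= w -> E 4 y z w = 0 ->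
  [/\ y = 4, z = 4 & w = 4].
Proof.
rewrite /E => hy hz hw h.
have h1 : 0 <= (y - 4) * (z * w) by apply: mulr_ge0; lia.
have h2 : 0 <= (z - 4) * (y * w) by apply: mulr_ge0; lia.
have h3 : 0 <= (w - 4) * (y * z) by apply: mulr_ge0; lia.
have h0 : (y - 4) * (z * w) + (z - 4) * (y * w) + (w - 4) * (y * z) = 0.
  by rewrite -h; ring.
have g1 : (y - 4) * (z * w) = 0 by lia.
have g2 : (z - 4) * (y * w) = 0 by lia.
have g3 : (w - 4) * (y * z) = 0 by lia.
have p1 : 0 < z * w by apply: mulr_gt0; lia.
have p2 : 0 < y * w by apply: mulr_gt0; lia.
have p3 : 0 < y * z by apply: mulr_gt0; lia.
move/eqP: g1; rewrite mulf_eq0 (gt_eqF p1) orbF subr_eq0 => /eqP ->.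
move/eqP: g2; rewrite mulf_eq0 (gt_eqF p2) orbF subr_eq0 => /eqP ->.
move/eqP: g3; rewrite mulf_eq0 (gt_eqF p3) orbF subr_eq0 => /eqP ->.
by [].
Qed.

Theorem lemma3p6 (a b c d : int) :
  1 <= a -> 1 <= b -> 1 <= c -> 1 <= d ->
  \det (Mabcd a b c d) = 0 ->
  Num.min (Num.min a b) (Num.min c d) = 3 ->
  [/\ a = 3, b = 3, c = 3 & d = 3].
Proof.
move=> _ _ _ _; rewrite detE => hd hm.
have : 3 <= Num.min (Num.min a b) (Num.min c d) by rewrite hm.
rewrite !le_min => /andP[/andP[ha hb] /andP[hc hdd]].
have : Num.min (Num.min a b) (Num.min c d) <= 3 by rewrite hm.
rewrite !ge_min => /orP[/orP[h|h]|/orP[h|h]].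
- have hE : E 4 (b + 1) (c + 1) (d + 1) = 0.
    rewrite /E; apply: etrans hd; rewrite (_ : a = 3); [ring | lia].
  have [] := @key (b + 1) (c + 1) (d + 1) ltac:(lia) ltac:(lia) ltac:(lia) hE => *; split; lia.
- have hE : E 4 (a + 1) (c + 1) (d + 1) = 0.
    rewrite /E; apply: etrans hd; rewrite (_ : b = 3); [ring | lia].
  have [] := @key (a + 1) (c + 1) (d + 1) ltac:(lia) ltac:(lia) ltac:(lia) hE => *; split; lia.
- have hE : E 4 (a + 1) (b + 1) (d + 1) = 0.
    rewrite /E; apply: etrans hd; rewrite (_ : c = 3); [ring | lia].
  have [] := @key (a + 1) (b + 1) (d + 1) ltac:(lia) ltac:(lia) ltac:(lia) hE => *; split; lia.
- have hE : E 4 (a + 1) (b + 1) (c + 1) = 0.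
    rewrite /E; apply: etrans hd; rewrite (_ : d = 3); [ring | lia].
  have [] := @key (a + 1) (b + 1) (c + 1) ltac:(lia) ltac:(lia) ltac:(lia) hE => *; split; lia.
Qed.
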